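(* Let $R$ be a commutative ring with identity, let $S$ be an anti-Archimedean multiplicative subset of $R$, and let $M$ be a unitary $R$-module. Let $N=\{f\in R[X]\mid c(f)=R\}$. Then the following statements are equivalent: (1) $M$ is an $S$-Noetherian $R$-module; (2) $M[X]$ is an $S$-Noetherian $R[X]$-module; (3) $M[X]_N$ is an $S$-Noetherian $R[X]_N$-module.
   Context: A multiplicative subset $S$ of $R$ is not assumed saturated. $S$ is anti-Archimedean if for every $s\in S$, $\bigcap_{n\geq 1}s^nR\cap S\neq\emptyset$. For a unitary $R$-module $M$, a submodule $L$ of $M$ is $S$-finite if there exist $s\in S$ and a finitely generated submodule $F$ of $M$ with $Ls\subseteq F\subseteq L$; $M$ is $S$-Noetherian if every submodule of $M$ is $S$-finite. For $f\in R[X]$ the content ideal $c(f)$ is the ideal of $R$ generated by the coefficients of $f$; $N$ is a regular multiplicative subset of $R[X]$, and $M[X]_N$ is the localization of the $R[X]$-module $M[X]$ at $N$. In (2) and (3), $S$ is regarded as a multiplicative subset of $R[X]$, resp. $R[X]_N$, via the natural maps. *)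

(* Defs.v *)
From HB Require Import structures.
From mathcomp Require Import all_boot all_order all_algebra.
Set Implicit Arguments. Unset Strict Implicit. Unset Printing Implicit Defensive.
Import Order.TTheory GRing.Theory Num.Theory.
Local Open Scope ring_scope.

Record modData := ModData {
  sc_ty : Type;
  car : Type;
  veq : car -> car -> Prop;
  vzero : car;
  vadd : car -> car -> car;
  vscale : sc_ty -> car -> car }.

Section GenericModule.
Variable D : modData.

Definition submodule (L : car D -> Prop) : Prop :=
  [/\ (forall x y, veq x y -> L x -> L y),
      L (vzero D),
      (forall x y, L x -> L y -> L (vadd x y)) &
      (forall a x, L x -> L (vscale a x))].

Definition lincomb (a : seq (sc_ty D)) (F : seq (car D)) : car D :=
  foldr (@vadd D) (vzero D) (map (fun p => vscale p.1 p.2) (zip a F)).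

Definition span (F : seq (car D)) (x : car D) : Prop :=
  exists a, size a = size F /\ veq x (lincomb a F).

Definition fin_gen (G : car D -> Prop) : Prop :=
  submodule G /\ exists F : seq (car D), forall x, G x <-> span F x.

Definition S_finite (S : sc_ty D -> Prop) (L : car D -> Prop) : Prop :=
  exists s, exists G, [/\ S s, fin_gen G,
    (forall x, L x -> G (vscale s x)) & (forall x, G x -> L x)].

Definition S_Noetherian (S : sc_ty D -> Prop) : Prop :=
  forall L, submodule L -> S_finite S L.

End GenericModule.
Arguments S_Noetherian : clear implicits.
Arguments S_finite : clear implicits.

Definition multiplicative (R : comNzRingType) (S : R -> Prop) : Prop :=
  S 1 /\ forall s t, S s -> S t -> S (s * t).

Definition anti_archimedean (R : comNzRingType) (S : R -> Prop) : Prop :=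
  forall s, S s -> exists t, S t /\ forall n : nat, (1 <= n)%N ->
    exists r : R, t = s ^+ n * r.

Section Content.
Variable R : comNzRingType.

Definition content (f : {poly R}) (x : R) : Prop :=
  exists r : seq R, x = \sum_(i < size f) r`_i * f`_i.

Definition Nset (f : {poly R}) : Prop := forall x : R, content f x.

End Content.

Section Modules.
Variables (R : comNzRingType) (M : lmodType R).

Definition modM : modData :=
  @ModData R M (@eq M) 0 +%R (fun a x => a *: x).

(* M[X]: finitely supported coefficient sequences (coefficient i = p`_i) *)
Definition eqMX (p q : seq M) : Prop := forall i, p`_i = q`_i.
Definition addMX (p q : seq M) : seq M :=
  mkseq (fun i => p`_i + q`_i) (maxn (size p) (size q)).
Definition oppMX (p : seq M) : seq M := map -%R p.
Definition scaleMX (f : {poly R}) (p : seq M) : seq M :=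
  mkseq (fun k => \sum_(i < k.+1) f`_i *: p`_(k - i)) (size f + size p).

Definition modMX : modData :=
  @ModData {poly R} (seq M) eqMX [::] addMX scaleMX.

(* R[X]_N and M[X]_N as fractions; a denominator is a finite list of
   elements of N, standing for their product. *)
Definition denN := seq {f : {poly R} | Nset f}.
Definition denv (d : denN) : {poly R} := \prod_(u <- d) sval u.

Definition eqMXN (x y : seq M * denN) : Prop :=
  exists w : {poly R}, Nset w /\
    eqMX (scaleMX w (addMX (scaleMX (denv y.2) x.1)
                           (oppMX (scaleMX (denv x.2) y.1)))) [::].
Definition addMXN (x y : seq M * denN) : seq M * denN :=
  (addMX (scaleMX (denv y.2) x.1) (scaleMX (denv x.2) y.1), x.2 ++ y.2).
Definition scaleMXN (a : {poly R} * denN) (x : seq M * denN) :=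
  (scaleMX a.1 x.1, a.2 ++ x.2).

Definition modMXN : modData :=
  @ModData ({poly R} * denN) (seq M * denN) eqMXN ([::], [::])
           addMXN scaleMXN.

End Modules.

Definition S_in_poly (R : comNzRingType) (S : R -> Prop) (f : {poly R}) :=
  exists s, S s /\ f = s%:P.
Definition S_in_polyN (R : comNzRingType) (S : R -> Prop)
    (a : {poly R} * denN R) :=
  exists s, S s /\ a = (s%:P, [::]).

(* Main.v *)
Require Import Defs.
From HB Require Import structures.
From mathcomp Require Import all_boot all_order all_algebra.
From mathcomp Require Import zify ring.
From Stdlib Require Import FunctionalExtensionality.
From Stdlib Require List.
Set Implicit Arguments. Unset Strict Implicit. Unset Printing Implicit Defensive.
Import Order.TTheory GRing.Theory Num.Theory.
Local Open Scope ring_scope.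
Local Notation span := Defs.span.
Local Notation multiplicative := Defs.multiplicative.


Section Conv.
Variables (R : comNzRingType) (M : lmodType R).
Implicit Types (f g h : {poly R}) (u v : nat -> M) (p q : seq M).

Definition cf p : nat -> M := fun k => p`_k.
Definition conv f u : nat -> M :=
  fun k => \sum_(i < k.+1) f`_i *: u (k - i)%N.

Lemma cf_nil : cf [::] = (fun _ => 0).
Proof. by apply: functional_extensionality => k; rewrite /cf nth_nil. Qed.

Lemma cf_add p q : cf (addMX p q) = cf p \+ cf q.
Proof.
apply: functional_extensionality => k; rewrite /cf /addMX /=.
case: (ltnP k (maxn (size p) (size q))) => hk; first by rewrite nth_mkseq.
rewrite nth_default ?size_mkseq // !nth_default ?addr0 //.
  exact: leq_trans (leq_maxr _ _) hk.
exact: leq_trans (leq_maxl _ _) hk.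
Qed.

Lemma cf_opp p : cf (oppMX p) = (fun k => - cf p k).
Proof.
apply: functional_extensionality => k; rewrite /cf /oppMX.
case: (ltnP k (size p)) => hk; first by rewrite (nth_map 0).
by rewrite !nth_default ?size_map ?oppr0.
Qed.

Lemma cf_scale f p : cf (scaleMX f p) = conv f (cf p).
Proof.
apply: functional_extensionality => k; rewrite /cf /scaleMX /conv.
case: (ltnP k (size f + size p)) => hk; first by rewrite nth_mkseq.
rewrite nth_default ?size_mkseq //; symmetry; apply: big1 => [[i /=]] hi _.
case: (ltnP i (size f)) => hif; last by rewrite nth_default // scale0r.
rewrite [p`_ _]nth_default ?scaler0 //.
rewrite leq_subRL //; apply: leq_trans hk; rewrite leq_add2r; exact: ltnW.
Qed.

Lemma eqMX_cf p q : eqMX p q <-> cf p = cf q.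
Proof.
split=> [h|h i]; first by apply: functional_extensionality.
by have := congr1 (fun u => u i) h.
Qed.

Lemma conv0l u : conv 0 u = (fun _ => 0).
Proof. apply: functional_extensionality => k; apply: big1 => i _; by rewrite coef0 scale0r. Qed.

Lemma conv0r f : conv f (fun _ => 0) = (fun _ => 0).
Proof. apply: functional_extensionality => k; apply: big1 => i _; by rewrite scaler0. Qed.

Lemma convC c u : conv c%:P u = (fun k => c *: u k).
Proof.
apply: functional_extensionality => k; rewrite /conv big_ord_recl /= coefC eqxx subn0.
by rewrite big1 ?addr0 // => i _; rewrite coefC /= scale0r.
Qed.

Lemma conv1 u : conv 1 u = u.
Proof. by rewrite convC; apply: functional_extensionality => k; rewrite scale1r. Qed.

Lemma convDl f g u : conv (f + g) u = conv f u \+ conv g u.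
Proof.
apply: functional_extensionality => k; rewrite /conv /= -big_split /=.
by apply: eq_bigr => i _; rewrite coefD scalerDl.
Qed.

Lemma convDr f u v : conv f (u \+ v) = conv f u \+ conv f v.
Proof.
apply: functional_extensionality => k; rewrite /conv /= -big_split /=.
by apply: eq_bigr => i _; rewrite scalerDr.
Qed.

Lemma convNr f u : conv f (fun k => - u k) = (fun k => - conv f u k).
Proof.
apply: functional_extensionality => k; rewrite /conv /= -sumrN.
by apply: eq_bigr => i _; rewrite scalerN.
Qed.

Lemma convNl f u : conv (- f) u = (fun k => - conv f u k).
Proof.
apply: functional_extensionality => k; rewrite /conv /= -sumrN.
by apply: eq_bigr => i _; rewrite coefN scaleNr.
Qed.

Lemma convA f g u : conv (f * g) u = conv f (conv g u).
Proof.
apply: functional_extensionality => k; rewrite /conv.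
rewrite (eq_bigr (fun i : 'I_k.+1 => \sum_(j < k.+1)
   (if (j <= i)%N then f`_j *: (g`_(i - j) *: u (k - i)%N) else 0))); last first.
  move=> i _; rewrite coefM scaler_suml.
  rewrite (big_ord_widen_cond k.+1 (fun _ => true)
     (fun j => f`_j * g`_(i - j) *: u (k - i)%N)) ?(ltn_ord i) //.
  by rewrite big_mkcond /=; apply: eq_bigr => j _; rewrite scalerA.
rewrite exchange_big /=; apply: eq_bigr => [[j /= hj]] _; rewrite scaler_sumr.
rewrite -(big_mkord xpredT (fun i => if (j <= i)%N then f`_j *: (g`_(i - j) *: u (k - i)%N) else 0)).
rewrite (big_cat_nat (leq0n j)) /=; last exact: ltnW.
rewrite [X in X + _]big1_seq ?add0r; last first.
  move=> i; rewrite mem_index_iota => /andP[_ hi].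
  by case: leqP => // h; move: (leq_trans hi h); rewrite ltnn.
rewrite -{1}(add0n j) big_addn big_mkord subSn //.
apply: eq_bigr => i _; rewrite leq_addl addnK; congr (_ *: (_ *: u _)).
by rewrite addnC subnDA.
Qed.

Lemma convC2 f g u : conv f (conv g u) = conv g (conv f u).
Proof. by rewrite -!convA mulrC. Qed.

Lemma convX j u k : conv 'X^j u k = if (j <= k)%N then u (k - j)%N else 0.
Proof.
rewrite /conv; case: ifP => hj.
  rewrite (bigD1 (Ordinal (hj : (j < k.+1)%N))) //= coefXn eqxx scale1r.
  rewrite big1 ?addr0 // => i hi; rewrite coefXn; case: eqP => [e|]; last by rewrite scale0r.
  by case/eqP: hi; apply: val_inj.
apply: big1 => [[i /= hi]] _; rewrite coefXn; case: eqP => [e|]; last by rewrite scale0r.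
by move: hi; rewrite e ltnS hj.
Qed.

End Conv.


Section SMod.
Variables (K : comNzRingType) (T : Type) (e : T -> T -> Prop) (z : T)
  (ad : T -> T -> T) (sc : K -> T -> T).

Record smod_ax : Prop := SmodAx {
  ax_refl : forall x, e x x;
  ax_sym : forall x y, e x y -> e y x;
  ax_trans : forall x y w, e x y -> e y w -> e x w;
  ax_addC : forall x x' y y', e x x' -> e y y' -> e (ad x y) (ad x' y');
  ax_scC : forall a x x', e x x' -> e (sc a x) (sc a x');
  ax_addA : forall x y w, e (ad x (ad y w)) (ad (ad x y) w);
  ax_addcomm : forall x y, e (ad x y) (ad y x);
  ax_add0 : forall x, e (ad z x) x;
  ax_scDr : forall a x y, e (sc a (ad x y)) (ad (sc a x) (sc a y));
  ax_scDl : forall a b x, e (sc (a + b) x) (ad (sc a x) (sc b x));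
  ax_scA : forall a b x, e (sc (a * b) x) (sc a (sc b x));
  ax_sc0 : forall x, e (sc 0 x) z;
  ax_sc1 : forall x, e (sc 1 x) x;
  ax_scz : forall a, e (sc a z) z }.

Hypothesis H : smod_ax.
Let Erefl x : e x x := ax_refl H x.
Let Esym x y : e x y -> e y x := @ax_sym H x y.
Let Etrans x y w : e x y -> e y w -> e x w := @ax_trans H x y w.
Let EaddC x x' y y' : e x x' -> e y y' -> e (ad x y) (ad x' y') := @ax_addC H x x' y y'.
Let EscC a x x' : e x x' -> e (sc a x) (sc a x') := @ax_scC H a x x'.
Let EaddA x y w : e (ad x (ad y w)) (ad (ad x y) w) := ax_addA H x y w.
Let Eaddcomm x y : e (ad x y) (ad y x) := ax_addcomm H x y.
Let Eadd0 x : e (ad z x) x := ax_add0 H x.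
Let EscDr a x y : e (sc a (ad x y)) (ad (sc a x) (sc a y)) := ax_scDr H a x y.
Let EscDl a b x : e (sc (a + b) x) (ad (sc a x) (sc b x)) := ax_scDl H a b x.
Let EscA a b x : e (sc (a * b) x) (sc a (sc b x)) := ax_scA H a b x.
Let Esc0 x : e (sc 0 x) z := ax_sc0 H x.
Let Esc1 x : e (sc 1 x) x := ax_sc1 H x.
Let Escz a : e (sc a z) z := ax_scz H a.
Local Notation D := (@ModData K T e z ad sc).

Lemma lincomb_cons c a x F :
  lincomb (D:=D) (c :: a) (x :: F) = ad (sc c x) (lincomb (D:=D) a F).
Proof. by []. Qed.

Lemma lincomb_nil a : lincomb (D:=D) a [::] = z.
Proof. by case: a. Qed.

Lemma lincomb_zero F : e (lincomb (D:=D) (nseq (size F) 0) F) z.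
Proof.
elim: F => [|x F IH] /=; first exact: (Erefl).
rewrite lincomb_cons; exact: (Etrans (EaddC (Esc0 x) IH) (Eadd0 z)).
Qed.

Lemma lincomb_add a b F : size a = size F -> size b = size F ->
  e (ad (lincomb (D:=D) a F) (lincomb (D:=D) b F))
    (lincomb (D:=D) [seq p.1 + p.2 | p <- zip a b] F).
Proof.
elim: F a b => [|x F IH] [|c a] [|d b] //= ha hb; try discriminate.
case: ha => ha; case: hb => hb; rewrite !lincomb_cons.
have h1 := IH a b ha hb.
apply: Etrans _ (EaddC (Esym (EscDl c d x)) h1).
set A := sc c x; set B := lincomb _ _; set C := sc d x; set E := lincomb _ _.
(* (A + B) + (C + E) ~ (A + C) + (B + E) *)
apply: Etrans (Esym (EaddA _ _ _)) _.
apply: Etrans _ (EaddA _ _ _).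
apply: EaddC; first exact: Erefl.
apply: Etrans (EaddA _ _ _) _.
apply: Etrans (EaddC (Eaddcomm _ _) (Erefl _)) _.
exact: Esym (EaddA _ _ _).
Qed.

Lemma lincomb_scale c a F :
  e (sc c (lincomb (D:=D) a F)) (lincomb (D:=D) [seq c * x | x <- a] F).
Proof.
elim: F a => [|x F IH] [|d a] /=; rewrite ?lincomb_nil; try exact: Escz.
rewrite !lincomb_cons.
apply: Etrans (EscDr _ _ _) _.
apply: EaddC (IH a); exact: Esym (EscA _ _ _).
Qed.

Lemma span_submodule F : submodule (span (D:=D) F).
Proof.
split.
- move=> x y hxy [a [ha hx]]; exists a; split => //.
  exact: Etrans (Esym hxy) hx.
- by exists (nseq (size F) 0); rewrite size_nseq; split => //; exact: Esym (lincomb_zero F).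
- move=> x y [a [ha hx]] [b [hb hy]].
  exists [seq p.1 + p.2 | p <- zip a b]; split.
    by rewrite size_map size_zip ha hb minnn.
  apply: Etrans (EaddC hx hy) _; exact: lincomb_add.
- move=> c x [a [ha hx]]; exists [seq c * x | x <- a]; split; first by rewrite size_map.
  apply: Etrans (EscC c hx) _; exact: lincomb_scale.
Qed.

Lemma span_In F x : List.In x F -> span (D:=D) F x.
Proof.
elim: F => [//|y F IH] /= [->|hx].
  exists (1 :: nseq (size F) 0); split; first by rewrite /= size_nseq.
  rewrite lincomb_cons.
  apply: Esym; apply: Etrans (EaddC (Esc1 _) (lincomb_zero F)) _.
  apply: Etrans (Eaddcomm _ _) _; exact: Eadd0.
case: (IH hx) => a [ha h]; exists (0 :: a); split; first by rewrite /= ha.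
rewrite lincomb_cons; apply: Etrans h _.
apply: Esym; apply: Etrans (EaddC (Esc0 _) (Erefl _)) _.
exact: Eadd0.
Qed.

Lemma span_sub (P : T -> Prop) F x : submodule (D:=D) P ->
  (forall y, List.In y F -> P y) -> span (D:=D) F x -> P x.
Proof.
case=> Pe P0 Pa Ps hF [a [ha hx]].
apply: Pe (Esym hx) _.
elim: F a ha hF {hx} => [|y F IH] [|c a] //= [ha] hF.
rewrite lincomb_cons; apply: Pa; first by apply: Ps; apply: hF; left.
by apply: IH => // w hw; apply: hF; right.
Qed.

Lemma span_catl F G x : span (D:=D) F x -> span (D:=D) (F ++ G) x.
Proof.
move=> hx; apply: span_sub hx; first exact: span_submodule.
by move=> y hy; apply: span_In; apply: List.in_or_app; left.
Qed.

Lemma span_catr F G x : span (D:=D) G x -> span (D:=D) (F ++ G) x.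
Proof.
move=> hx; apply: span_sub hx; first exact: span_submodule.
by move=> y hy; apply: span_In; apply: List.in_or_app; right.
Qed.

Lemma fin_gen_span F : fin_gen (span (D:=D) F).
Proof. by split; [exact: span_submodule | exists F]. Qed.

Lemma submodule_lincomb (P : T -> Prop) a F : submodule (D:=D) P ->
  (forall y, List.In y F -> P y) -> P (lincomb (D:=D) a F).
Proof.
case=> Pe P0 Pa Ps.
elim: F a => [|y F IH] [|c a] hF //=; rewrite ?lincomb_nil //.
rewrite lincomb_cons; apply: Pa; first by apply: Ps; apply: hF; left.
by apply: IH => w hw; apply: hF; right.
Qed.

End SMod.


Section Inst.
Variables (R : comNzRingType) (M : lmodType R).

Lemma smodM : smod_ax (@eq M) 0 +%R (fun (a : R) (x : M) => a *: x).
Proof.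
split.
- by [].
- by move=> x y ->.
- by move=> x y w -> ->.
- by move=> x x' y y' -> ->.
- by move=> a x x' ->.
- by move=> *; rewrite addrA.
- by move=> *; rewrite addrC.
- by move=> *; rewrite add0r.
- by move=> *; rewrite scalerDr.
- by move=> *; rewrite scalerDl.
- by move=> *; rewrite scalerA.
- by move=> *; rewrite scale0r.
- by move=> *; rewrite scale1r.
- by move=> *; rewrite scaler0.
Qed.

Lemma smodMX : smod_ax (@eqMX R M) [::] (@addMX R M) (@scaleMX R M).
Proof.
split.
- by move=> x; apply/eqMX_cf.
- by move=> x y /eqMX_cf h; apply/eqMX_cf.
- by move=> x y w /eqMX_cf h1 /eqMX_cf h2; apply/eqMX_cf; rewrite h1 h2.
- by move=> x x' y y' /eqMX_cf h1 /eqMX_cf h2; apply/eqMX_cf; rewrite !cf_add h1 h2.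
- by move=> a x x' /eqMX_cf h1; apply/eqMX_cf; rewrite !cf_scale h1.
- move=> x y w; apply/eqMX_cf; rewrite !cf_add; apply: functional_extensionality => k.
  by rewrite /= addrA.
- move=> x y; apply/eqMX_cf; rewrite !cf_add; apply: functional_extensionality => k.
  by rewrite /= addrC.
- move=> x; apply/eqMX_cf; rewrite !cf_add cf_nil; apply: functional_extensionality => k.
  by rewrite /= add0r.
- by move=> a x y; apply/eqMX_cf; rewrite !(cf_scale, cf_add) convDr.
- by move=> a b x; apply/eqMX_cf; rewrite !(cf_scale, cf_add) convDl.
- by move=> a b x; apply/eqMX_cf; rewrite !cf_scale convA.
- by move=> x; apply/eqMX_cf; rewrite !cf_scale conv0l cf_nil.
- by move=> x; apply/eqMX_cf; rewrite !cf_scale conv1.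
- by move=> a; apply/eqMX_cf; rewrite !cf_scale cf_nil conv0r.
Qed.

Lemma test F : Defs.submodule (span (D:=modMX M) F).
Proof. exact: (span_submodule smodMX). Qed.
Lemma test2 F : Defs.submodule (span (D:=modM M) F).
Proof. exact: (span_submodule smodM). Qed.

End Inst.


Section ContentMul.
Variable R : comNzRingType.
Implicit Types (f g : {poly R}).

Definition ideal (J : R -> Prop) :=
  [/\ J 0, (forall x y, J x -> J y -> J (x + y)) & (forall c x, J x -> J (c * x))].

Lemma idealN J x : ideal J -> J x -> J (- x).
Proof. by case=> _ _ hm hx; rewrite -mulN1r; apply: hm. Qed.

Lemma idealB J x y : ideal J -> J x -> J y -> J (x - y).
Proof. by move=> hJ hx hy; case: (hJ) => _ ha _; apply: ha hx (idealN hJ hy). Qed.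

Lemma ideal_sum J n (F : 'I_n -> R) : ideal J -> (forall i, J (F i)) -> J (\sum_(i < n) F i).
Proof.
case=> h0 ha hm hF; apply: (big_ind J) => //.
Qed.

Lemma poly_split f : f = Poly (behead f) * 'X + (f`_0)%:P.
Proof.
apply/polyP => i; rewrite coefD coefMX coefC coef_Poly.
by case: i => [|i] /=; rewrite ?add0r ?addr0 // nth_behead.
Qed.

Lemma key n : forall (J : R -> Prop) f g, ideal J -> (size f <= n)%N ->
  (forall k, J (f * g)`_k) ->
  (exists m (r : nat -> R), J (1 - \sum_(i < m) r i * f`_i)) ->
  (exists m (r : nat -> R), J (1 - \sum_(i < m) r i * g`_i)) -> J 1.
Proof.
elim: n => [|n IH] J f g hJ hs hfg [m [r hf]] hg.
  have f0 : f = 0 by apply/eqP; rewrite -size_poly_eq0 -leqn0.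
  move: hf; rewrite f0 big1 ?subr0 // => i _; by rewrite coef0 mulr0.
case: m r hf => [|m] r hf; first by move: hf; rewrite big_ord0 subr0.
set a0 := f`_0; set f1 := Poly (behead f).
have hsplit := poly_split f; rewrite -/a0 -/f1 in hsplit.
case: (hJ) => hJ0 hJa hJm.
pose J' := fun x => exists c, J (x - c * a0).
have hJ' : ideal J'.
  split.
  - by exists 0; rewrite mul0r subr0.
  - move=> x y [c hc] [d hd]; exists (c + d).
    by have := hJa _ _ hc hd; rewrite mulrDl opprD addrACA.
  - move=> c x [d hd]; exists (c * d).
    by have := hJm c _ hd; rewrite mulrBr mulrA.
have hpow : forall j, J (a0 ^+ j.+1 * g`_j).
  elim/ltn_ind => j IHj.
  have hj := hJm (a0 ^+ j) _ (hfg j).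
  rewrite coefM big_ord_recl /= subn0 mulrDr -/a0 in hj.
  have hrest : J (a0 ^+ j * \sum_(i < j) f`_(bump 0 i) * g`_(j - bump 0 i)).
    rewrite mulr_sumr; apply: ideal_sum => // i.
    have hi : (j - bump 0 i < j)%N.
      by have := ltn_ord i; rewrite /bump /=; lia.
    have := hJm (a0 ^+ i * f`_(bump 0 i)) _ (IHj _ hi).
    set k := (j - bump 0 i)%N.
    have e : j = (i + k.+1)%N by have := ltn_ord i; rewrite /k /bump /=; lia.
    have -> : a0 ^+ j = a0 ^+ i * a0 ^+ k.+1 by rewrite -exprD -e.
    by congr J; ring.
  have := idealB hJ hj hrest; rewrite addrK.
  by rewrite mulrA -exprSr.
have [N hN] : exists N, J (a0 ^+ N).
  case: hg => mg [rg hg]; exists mg.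
  have -> : a0 ^+ mg = a0 ^+ mg * (1 - \sum_(i < mg) rg i * g`_i)
      + \sum_(i < mg) rg i * (a0 ^+ mg * g`_i).
    rewrite mulrBr mulr1 mulr_sumr.
    rewrite [X in _ + X](eq_bigr (fun i : 'I_mg => a0 ^+ mg * (rg i * g`_i))) ?subrK //.
    by move=> i _; ring.
  apply: (hJa); first exact: (hJm).
  apply: ideal_sum => // i; apply: (hJm).
  have e : mg = ((mg - i.+1) + i.+1)%N by have := ltn_ord i; lia.
  have -> : a0 ^+ mg = a0 ^+ (mg - i.+1) * a0 ^+ i.+1 by rewrite -exprD -e.
  by rewrite -mulrA; apply: (hJm).
have hf1 : (size f1 <= n)%N.
  by apply: leq_trans (size_Poly _) _; rewrite size_behead; move: hs; lia.
have [c hc] : J' 1.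
  apply: (IH J' f1 g hJ' hf1).
  - move=> k; exists (- g`_k.+1).
    have := hfg k.+1; rewrite {1}hsplit mulrDl coefD mulrAC coefMX coefCM /=.
    by rewrite mulNr opprK [_ * a0]mulrC.
  - exists m, (fun i => r i.+1), (r 0).
    suff e : (1 - \sum_(i < m) r i.+1 * f1`_i) - r 0 * a0 = 1 - \sum_(i < m.+1) r i * f`_i.
      by rewrite e.
    rewrite big_ord_recl /= opprD addrA [LHS]addrAC; congr (_ - _).
    apply: eq_bigr => i _; by rewrite /f1 coef_Poly nth_behead.
  - case: hg => mg [rg hg]; exists mg, rg, 0; by rewrite mul0r subr0.
have h1 : J (1 - (c * a0) ^+ N).
  by rewrite -{1}(expr1n _ N) subrXX mulrC; apply: (hJm).
have h2 : J ((c * a0) ^+ N) by rewrite exprMn; apply: (hJm).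
by have := hJa _ _ h1 h2; rewrite subrK.
Qed.

Lemma Nset_1 : Nset (1 : {poly R}).
Proof.
move=> x; exists [:: x]; rewrite size_poly1 big_ord1 coefC /=.
by rewrite mulr1.
Qed.

Lemma content1 f : content f 1 -> Nset f.
Proof.
case=> r hr x; exists [seq x * y | y <- r].
transitivity (x * 1); first by rewrite mulr1.
rewrite [in LHS]hr mulr_sumr; apply: eq_bigr => i _.
case: (ltnP i (size r)) => hi; first by rewrite (nth_map 0) // mulrA.
by rewrite (nth_default _ hi) (nth_default 0 (s:=[seq x * y | y <- r])) ?size_map // !mul0r mulr0.
Qed.

Lemma Nset_mul f g : Nset f -> Nset g -> Nset (f * g).
Proof.
move=> hf hg; apply: content1.
pose J := fun x => exists r : nat -> R, x = \sum_(i < size (f * g)) r i * (f * g)`_i.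
have hJ : ideal J.
  split.
  - by exists (fun _ => 0); rewrite big1 // => i _; rewrite mul0r.
  - move=> x y [r ->] [r' ->]; exists (fun i => r i + r' i).
    by rewrite -big_split; apply: eq_bigr => i _; rewrite mulrDl.
  - move=> c x [r ->]; exists (fun i => c * r i).
    by rewrite mulr_sumr; apply: eq_bigr => i _; rewrite mulrA.
have : J 1.
  apply: (@key (size f) J f g hJ (leqnn _)).
  - move=> k; case: (ltnP k (size (f * g))) => hk.
      exists (fun i => if i == k then 1 else 0).
      rewrite (bigD1 (Ordinal hk)) //= eqxx mul1r big1 ?addr0 // => i hi.
      by rewrite ifN ?mul0r //; apply: contra hi => /eqP e; apply/eqP/val_inj.
    by exists (fun _ => 0); rewrite nth_default // big1 // => i _; rewrite mul0r.
  - case: (hf 1) => r hr; exists (size f), (fun i => r`_i).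
    by rewrite -hr subrr; case: hJ.
  - case: (hg 1) => r hr; exists (size g), (fun i => r`_i).
    by rewrite -hr subrr; case: hJ.
case=> r hr; exists (mkseq r (size (f * g))); rewrite hr.
by apply: eq_bigr => i _; rewrite nth_mkseq.
Qed.

Lemma Nset_prod (s : seq {poly R}) : (forall x, x \in s -> Nset x) -> Nset (\prod_(x <- s) x).
Proof.
elim: s => [|x s IH] hs; first by rewrite big_nil; exact: Nset_1.
rewrite big_cons; apply: Nset_mul; first by apply: hs; rewrite inE eqxx.
by apply: IH => y hy; apply: hs; rewrite inE hy orbT.
Qed.

End ContentMul.


Section Loc.
Variables (R : comNzRingType) (M : lmodType R).
Implicit Types (f g h w : {poly R}) (u v : nat -> M) (p q : seq M).
Local Notation frac := (seq M * denN R)%type.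

Lemma funext_add u v u' v' : u = u' -> v = v' -> u \+ v = u' \+ v'.
Proof. by move=> -> ->. Qed.

Lemma conv_mul f g u v h : conv f u = conv g v -> conv (h * f) u = conv (h * g) v.
Proof. by move=> e; rewrite !convA e. Qed.

Lemma Nset_denv (d : denN R) : Nset (denv d).
Proof.
elim: d => [|x d IH]; first by rewrite /denv big_nil; exact: Nset_1.
by rewrite /denv big_cons; apply: Nset_mul => //; case: x.
Qed.

Lemma denv_cat (d e : denN R) : denv (d ++ e) = denv d * denv e.
Proof. by rewrite /denv big_cat. Qed.

Lemma denv_nil : denv ([::] : denN R) = 1.
Proof. by rewrite /denv big_nil. Qed.

Lemma eqN_iff (x y : frac) : eqMXN x y <->
  exists w, Nset w /\ conv (w * denv y.2) (cf x.1) = conv (w * denv x.2) (cf y.1).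
Proof.
split=> [[w [hw /eqMX_cf h]]|[w [hw h]]]; exists w; split => //.
  move: h; rewrite cf_scale cf_add cf_opp !cf_scale cf_nil convDr convNr -!convA => h.
  apply: functional_extensionality => k.
  by have /= /eqP := congr1 (fun u => u k) h; rewrite subr_eq0 => /eqP.
apply/eqMX_cf; rewrite cf_scale cf_add cf_opp !cf_scale cf_nil convDr convNr -!convA h.
by apply: functional_extensionality => k /=; rewrite subrr.
Qed.

Lemma eqN_refl (x : frac) : eqMXN x x.
Proof. by apply/eqN_iff; exists 1; split => //; exact: Nset_1. Qed.

Lemma eqN_sym (x y : frac) : eqMXN x y -> eqMXN y x.
Proof. by move/eqN_iff => [w [hw h]]; apply/eqN_iff; exists w; split. Qed.

Lemma eqN_trans (x y z : frac) : eqMXN x y -> eqMXN y z -> eqMXN x z.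
Proof.
move/eqN_iff => [w1 [hw1 h1]] /eqN_iff [w2 [hw2 h2]]; apply/eqN_iff.
exists (w1 * w2 * denv y.2); split.
  by apply: Nset_mul; [apply: Nset_mul | apply: Nset_denv].
set X := denv x.2 in h1 *; set Y := denv y.2 in h1 h2 *; set Z := denv z.2 in h2 *.
have e1 := conv_mul (w2 * Z) h1.
have e2 := conv_mul (w1 * X) h2.
rewrite (_ : w1 * w2 * Y * Z = w2 * Z * (w1 * Y)); last by ring.
rewrite e1 (_ : w2 * Z * (w1 * X) = w1 * X * (w2 * Z)); last by ring.
by rewrite e2; congr conv; ring.
Qed.

Lemma cf_addN1 (x y : frac) :
  cf (addMXN x y).1 = conv (denv y.2) (cf x.1) \+ conv (denv x.2) (cf y.1).
Proof. by rewrite /= cf_add !cf_scale. Qed.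

Lemma addN_compat_l (x x' y : frac) : eqMXN x x' -> eqMXN (addMXN x y) (addMXN x' y).
Proof.
move/eqN_iff => [w [hw h]]; apply/eqN_iff; exists w; split => //.
rewrite !cf_addN1 /= !denv_cat !convDr.
apply: funext_add.
  rewrite -!convA (_ : w * (denv x'.2 * denv y.2) * denv y.2 = denv y.2 * denv y.2 * (w * denv x'.2)); last by ring.
  rewrite convA h -convA; congr conv; ring.
rewrite -!convA; congr conv; ring.
Qed.

Lemma addN_compat_r (x y y' : frac) : eqMXN y y' -> eqMXN (addMXN x y) (addMXN x y').
Proof.
move/eqN_iff => [w [hw h]]; apply/eqN_iff; exists w; split => //.
rewrite !cf_addN1 /= !denv_cat !convDr.
apply: funext_add.
  rewrite -!convA; congr conv; ring.
rewrite -!convA (_ : w * (denv x.2 * denv y'.2) * denv x.2 = denv x.2 * denv x.2 * (w * denv y'.2)); last by ring.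
rewrite convA h -convA; congr conv; ring.
Qed.

Lemma scaleN_compat a (x x' : frac) : eqMXN x x' -> eqMXN (scaleMXN a x) (scaleMXN a x').
Proof.
move/eqN_iff => [w [hw h]]; apply/eqN_iff; exists w; split => //.
rewrite /= !cf_scale !denv_cat -!convA.
rewrite (_ : w * (denv a.2 * denv x'.2) * a.1 = a.1 * denv a.2 * (w * denv x'.2)); last by ring.
rewrite convA h -convA; congr conv; ring.
Qed.

End Loc.


Section Loc2.
Variables (R : comNzRingType) (M : lmodType R).
Implicit Types (f g h w : {poly R}) (u v : nat -> M) (p q : seq M).
Local Notation frac := (seq M * denN R)%type.

Definition TP (P : seq M -> Prop) (x : frac) := exists q d, P q /\ eqMXN x (q, d).

Lemma TP_sub P : Defs.submodule (D:=modMX M) P -> Defs.submodule (D:=modMXN M) (TP P).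
Proof.
case=> Pe P0 Pa Ps; split.
- move=> x y hxy [q [d [hq h]]]; exists q, d; split => //.
  exact: eqN_trans (eqN_sym hxy) h.
- by exists [::], [::]; split => //; exact: eqN_refl.
- move=> x y [q [d [hq hx]]] [q' [d' [hq' hy]]].
  exists (addMXN (q, d) (q', d')).1, (addMXN (q, d) (q', d')).2; split.
    by apply: (Pa); apply: (Ps).
  apply: eqN_trans (addN_compat_l y hx) _.
  by rewrite -surjective_pairing; exact: addN_compat_r.
- move=> a x [q [d [hq hx]]].
  exists (scaleMXN a (q, d)).1, (scaleMXN a (q, d)).2; split; first by apply: (Ps).
  by rewrite -surjective_pairing; exact: scaleN_compat.
Qed.

Lemma lincombX_cons c a x F :
  lincomb (D:=modMX M) (c :: a) (x :: F) = addMX (scaleMX c x) (lincomb (D:=modMX M) a F).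
Proof. by []. Qed.

Lemma lincombN_cons c a x F :
  lincomb (D:=modMXN M) (c :: a) (x :: F) = addMXN (scaleMXN c x) (lincomb (D:=modMXN M) a F).
Proof. by []. Qed.

Lemma lincombN_nf P a F : Defs.submodule (D:=modMX M) P ->
  (forall y, List.In y F -> P y.1) -> P (lincomb (D:=modMXN M) a F).1.
Proof.
case=> Pe P0 Pa Ps.
elim: F a => [|y F IH] [|c a] hF //.
rewrite lincombN_cons /=; apply: (Pa); apply: (Ps).
  by apply: (Ps); apply: (hF); left.
by apply: IH => z hz; apply: (hF); right.
Qed.

Lemma lincombN_conv F b q d : size b = size F ->
  eqMX q (lincomb (D:=modMX M) b F) ->
  exists a, size a = size F /\
    eqMXN (q, d) (lincomb (D:=modMXN M) a [seq (p, [::] : denN R) | p <- F]).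
Proof.
elim: F b q => [|F0 F IH] [|b0 b] q //= hs hq.
  exists [::]; split => //; apply/eqN_iff; exists 1; split; first exact: Nset_1.
  move/eqMX_cf: hq => /= ->.
  by rewrite /lincomb /= cf_nil !conv0r.
case: hs => hs.
have [a1 [ha1 h1]] := IH b (lincomb (D:=modMX M) b F) hs (ax_refl (smodMX M) _).
case hQ : (lincomb (D:=modMXN M) a1 [seq (p, [::] : denN R) | p <- F]) h1 => [Q1 D1].
move=> /eqN_iff [w [hw h1]].
exists ((b0, d) :: a1); split; first by rewrite /= ha1.
rewrite /= lincombN_cons hQ; apply/eqN_iff; exists w; split => //.
move/eqMX_cf: hq; rewrite lincombX_cons cf_add cf_scale => ->.
rewrite /= cf_add !cf_scale !denv_cat denv_nil mulr1 !convDr /=.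
apply: funext_add.
  rewrite -!convA; congr conv; ring.
move: h1 => /= h1.
rewrite -!convA (_ : w * (denv d * denv D1) = denv d * (w * denv D1)); last by ring.
by rewrite convA h1 -convA; congr conv; ring.
Qed.

Lemma lincombN_zero F : cf (lincomb (D:=modMXN M) (nseq (size F) (0, [::])) F).1 = (fun _ => 0).
Proof.
elim: F => [|x F IH]; first by rewrite /lincomb /= cf_nil.
rewrite [nseq _ _]/= lincombN_cons /= cf_add !cf_scale.
move: IH; set Z := lincomb _ _; case: Z => Z1 Z2 /= ->.
rewrite conv0l !conv0r; apply: functional_extensionality => k /=; by rewrite addr0.
Qed.

Lemma spanN_In F y : List.In y F -> span (D:=modMXN M) F y.
Proof.
elim: F => [//|x F IH] /= [<-|hy].
  exists ((1, [::]) :: nseq (size F) (0, [::])); split; first by rewrite /= size_nseq.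
  rewrite lincombN_cons.
  have := lincombN_zero F; set Z := lincomb _ _; case: Z => Z1 Z2 /= hZ.
  apply/eqN_iff; exists 1; split; first exact: Nset_1.
  rewrite /= cf_add !cf_scale hZ conv0r conv1 denv_cat ?denv_nil !mul1r.
  have -> : conv (denv Z2) (cf x.1) \+ (fun=> 0) = conv (denv Z2) (cf x.1).
    by apply: functional_extensionality => k /=; rewrite addr0.
  by rewrite convA.
case: (IH hy) => a [ha h]; exists ((0, [::]) :: a); split; first by rewrite /= ha.
rewrite lincombN_cons; case hQ : (lincomb (D:=modMXN M) a F) h => [Q1 Q2].
move=> /eqN_iff [w [hw h]]; apply/eqN_iff; exists w; split => //.
rewrite /= cf_add !cf_scale conv0l conv0r ?denv_nil ?mul1r denv_cat.
move: h => /= h.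
have -> : (fun _ : nat => (0 : M)) \+ conv (denv x.2) (cf Q1) = conv (denv x.2) (cf Q1).
  by apply: functional_extensionality => k /=; rewrite add0r.
rewrite (_ : w * (denv x.2 * denv Q2) = denv x.2 * (w * denv Q2)); last by ring.
by rewrite convA h -!convA; congr conv; ring.
Qed.

End Loc2.


Section Main1.
Variables (R : comNzRingType) (M : lmodType R).
Implicit Types (f g h w : {poly R}) (u v : nat -> M) (p q : seq M).
Local Notation frac := (seq M * denN R)%type.

Lemma nth_addMX p q k : (addMX p q)`_k = p`_k + q`_k.
Proof. by have := congr1 (fun u => u k) (cf_add p q). Qed.

Lemma nth_scaleMX f p k : (scaleMX f p)`_k = conv f (cf p) k.
Proof. by have := congr1 (fun u => u k) (cf_scale f p). Qed.

Lemma conv_single f (c : M) k : conv f (cf [:: c]) k = f`_k *: c.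
Proof.
rewrite /conv big_ord_recr /= subnn big1 ?add0r // => i _.
have := ltn_ord i; rewrite -subn_gt0 /cf; case: (k - i)%N => [//|n] _ /=.
by rewrite nth_nil scaler0.
Qed.

Lemma lincombM_cons c a (x : M) F :
  lincomb (D:=modM M) (c :: a) (x :: F) = c *: x + lincomb (D:=modM M) a F.
Proof. by []. Qed.

Lemma subM_sum (L : M -> Prop) n (G : 'I_n -> M) : Defs.submodule (D:=modM M) L ->
  (forall i, L (G i)) -> L (\sum_(i < n) G i).
Proof. by case=> _ L0 La _ hG; apply: big_ind. Qed.

Lemma LX_sub (L : M -> Prop) : Defs.submodule (D:=modM M) L ->
  Defs.submodule (D:=modMX M) (fun p => forall k, L p`_k).
Proof.
move=> hL; case: (hL) => Le L0 La Ls; split.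
- by move=> x y hxy hx k; rewrite -(hxy k).
- by move=> k; rewrite nth_nil.
- by move=> x y hx hy k; rewrite nth_addMX; apply: La.
- move=> a x hx k; rewrite nth_scaleMX; apply: subM_sum => // i.
  by apply: (Ls); apply: hx.
Qed.

Lemma content_sc (L : M -> Prop) W (m : M) : Defs.submodule (D:=modM M) L ->
  Nset W -> (forall k, L (W`_k *: m)) -> L m.
Proof.
move=> hL hW hk; case: (hW 1) => r hr.
have -> : m = \sum_(i < size W) r`_i *: (W`_i *: m).
  by rewrite -[m in LHS]scale1r hr scaler_suml; apply: eq_bigr => i _; rewrite scalerA.
apply: subM_sum => // i; case: hL => _ _ _ Ls; exact: Ls.
Qed.

Lemma lincombX_coef0 a F :
  (lincomb (D:=modMX M) a F)`_0 = lincomb (D:=modM M) [seq f`_0 | f <- a] [seq p`_0 | p <- F].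
Proof.
elim: F a => [|x F IH] [|c a] //=.
rewrite lincombX_cons lincombM_cons nth_addMX nth_scaleMX IH; congr (_ + _).
by rewrite /conv big_ord1.
Qed.

Lemma In_map_ex (A B : Type) (fn : A -> B) (l : seq A) y :
  List.In y (map fn l) -> exists x, List.In x l /\ y = fn x.
Proof.
elim: l => [//|x l IH] /= [<-|h]; first by exists x; split => //; left.
by case: (IH h) => z [hz ->]; exists z; split => //; right.
Qed.

Lemma In_map (A B : Type) (fn : A -> B) (l : seq A) x :
  List.In x l -> List.In (fn x) (map fn l).
Proof. by elim: l => [//|y l IH] /= [->|h]; [left|right; apply: IH]. Qed.

Lemma p2p1 (S : R -> Prop) : multiplicative S ->
  S_Noetherian (modMX M) (S_in_poly S) -> S_Noetherian (modM M) S.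
Proof.
move=> hS h2 L hL.
have hLX := LX_sub hL.
case: (h2 _ hLX) => sp [G [[s [hs ->]] [hGsub [F hF]] hLG hGL]].
exists s, (span (D:=modM M) [seq p`_0 | p <- F]); split => //.
- exact: (fin_gen_span (smodM M)).
- move=> m hm.
  have hm' : forall k, L ([:: m]`_k).
    by case=> [|k] //=; rewrite nth_nil; case: hL.
  have /hF [a [ha he]] := hLG _ hm'.
  exists [seq f`_0 | f <- a]; split; first by rewrite !size_map.
  have := he 0%N; rewrite lincombX_coef0 nth_scaleMX => <-.
  rewrite convC /=; by [].
- move=> x; apply: (span_sub (smodM M)) => // y hy; case: (In_map_ex hy) => p [hp ->].
  have : G p by apply/hF; apply: (span_In (smodMX M)).
  by move/hGL => h; apply: h.
Qed.

End Main1.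


Section Main2.
Variables (R : comNzRingType) (M : lmodType R).
Implicit Types (f g h w : {poly R}) (u v : nat -> M) (p q : seq M).
Local Notation frac := (seq M * denN R)%type.

Lemma eqN_of_eqMX p q (d e : denN R) : denv d = denv e -> eqMX p q -> eqMXN (p, d) (q, e).
Proof.
move=> hd /eqMX_cf hpq; apply/eqN_iff; exists 1; split; first exact: Nset_1.
by rewrite /= hd hpq.
Qed.

Lemma p2p3 (S : R -> Prop) :
  S_Noetherian (modMX M) (S_in_poly S) -> S_Noetherian (modMXN M) (S_in_polyN S).
Proof.
move=> h2 L' hL'; case: (hL') => L'e L'0 L'a L's.
pose L := fun p => L' (p, [::] : denN R).
have hL : Defs.submodule (D:=modMX M) L.
  split.
  - move=> p q hpq hp; apply: L'e hp; exact: eqN_of_eqMX.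
  - exact: L'0.
  - move=> p q hp hq; have := L'a _ _ hp hq; apply: L'e.
    apply: eqN_of_eqMX => //; apply/eqMX_cf; by rewrite /= !cf_add !cf_scale !denv_nil !conv1.
  - by move=> a p hp; have := L's (a, [::]) _ hp.
case: (h2 _ hL) => sp [G [[s [hs ->]] [hGsub [F hF]] hLG hGL]].
exists (s%:P, [::]), (TP G); split.
- by exists s.
- split; first exact: TP_sub.
  exists [seq (p, [::] : denN R) | p <- F] => x; split.
    case=> q [d [hq hx]].
    have [b [hb hqb]] := (iffLR (hF q)) hq.
    have [a [ha hxa]] := lincombN_conv d hb hqb.
    exists a; split; first by rewrite ha size_map.
    exact: eqN_trans hx hxa.
  case=> a [ha hx]; exists (lincomb (D:=modMXN M) a [seq (p, [::] : denN R) | p <- F]).1.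
  exists (lincomb (D:=modMXN M) a [seq (p, [::] : denN R) | p <- F]).2; split.
    apply: lincombN_nf => // y hy; case: (In_map_ex hy) => p [hp ->] /=.
    by apply/hF; apply: (span_In (smodMX M)).
  by rewrite -surjective_pairing.
- case=> p d hx; exists (scaleMX s%:P p), d; split; last exact: eqN_refl.
  apply: hLG; rewrite /L.
  have := L's (denv d, [::]) _ hx; apply: L'e.
  apply/eqN_iff; exists 1; split; first exact: Nset_1.
  by rewrite /= cf_scale denv_nil mulr1 conv1 mul1r.
- move=> x [q [d [hq hx]]].
  have := L's (1, d) _ (hGL _ hq); apply: L'e.
  apply: eqN_trans (eqN_sym hx).
  apply/eqN_iff; exists 1; split; first exact: Nset_1.
  by rewrite /= cf_scale conv1 denv_cat denv_nil mulr1.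
Qed.

End Main2.


Lemma choice_zip (A B : Type) (P : A -> B -> Prop) (l : seq A) :
  (forall x, List.In x l -> exists b, P x b) ->
  exists bs : seq B, (forall x, List.In x l -> exists b, List.In (x, b) (zip l bs)) /\
                     (forall x b, List.In (x, b) (zip l bs) -> P x b).
Proof.
elim: l => [|x l IH] hl; first by exists [::]; split.
have [b hb] := hl x (or_introl erefl).
have [bs [h1 h2]] := IH (fun y hy => hl y (or_intror hy)).
exists (b :: bs); split.
  move=> y /= [<-|hy]; first by exists b; left.
  by case: (h1 y hy) => c hc; exists c; right.
by move=> y c /= [[<- <-]|h]; [exact: hb | exact: h2].
Qed.

Lemma In_flatten (A B : Type) (fn : A -> seq B) l x y :
  List.In x l -> List.In y (fn x) -> List.In y (flatten (map fn l)).
Proof.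
elim: l => [//|z l IH] /= [->|hx] hy; apply: List.in_or_app; first by left.
by right; apply: IH.
Qed.

Lemma In_flatten_inv (A B : Type) (fn : A -> seq B) l y :
  List.In y (flatten (map fn l)) -> exists x, List.In x l /\ List.In y (fn x).
Proof.
elim: l => [//|z l IH] /= hyy; case: (List.in_app_or _ _ _ hyy) => h; first by exists z; split => //; left.
by case: (IH h) => x [hx hy]; exists x; split => //; right.
Qed.

Lemma In_nth (T : Type) (x0 : T) (s : seq T) k : (k < size s)%N -> List.In (nth x0 s k) s.
Proof.
elim: s k => [//|x s IH] [|k] //= hk; first by left.
by right; apply: IH.
Qed.

Lemma In_nth_inv (T : Type) (x0 : T) (s : seq T) y : List.In y s ->
  exists k, (k < size s)%N /\ y = nth x0 s k.
Proof.
elim: s => [//|x s IH] /= [<-|h]; first by exists 0%N.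
by case: (IH h) => k [hk ->]; exists k.+1.
Qed.

Section Main3.
Variables (R : comNzRingType) (M : lmodType R).
Implicit Types (f g h w : {poly R}) (p q : seq M).
Local Notation frac := (seq M * denN R)%type.

Lemma prod_split (A : Type) (l : seq (A * {poly R})) z : List.In z l ->
  exists V, \prod_(yu <- l) yu.2 = V * z.2.
Proof.
elim: l => [//|a l IH] /= [<-|h]; rewrite big_cons.
  by exists (\prod_(yu <- l) yu.2); rewrite mulrC.
by case: (IH h) => V ->; exists (a.2 * V); rewrite mulrA.
Qed.

Lemma prod_N (A : Type) (l : seq (A * {poly R})) : (forall z, List.In z l -> Nset z.2) ->
  Nset (\prod_(yu <- l) yu.2).
Proof.
elim: l => [|a l IH] hl; first by rewrite big_nil; exact: Nset_1.
rewrite big_cons; apply: Nset_mul; first by apply: hl; left.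
by apply: IH => z hz; apply: hl; right.
Qed.

Lemma cf_single (c : R) (m : M) : cf (scaleMX c%:P [:: m]) = cf [:: c *: m].
Proof.
rewrite cf_scale convC; apply: functional_extensionality => k.
by case: k => [|k] //=; rewrite /cf /= nth_nil scaler0.
Qed.

Lemma convE f (u : nat -> M) k : conv f u k = \sum_(i < k.+1) f`_i *: u (k - i)%N.
Proof. by []. Qed.

Lemma span0 (F : seq M) : span (D:=modM M) F 0.
Proof. by case: (span_submodule (smodM M) F). Qed.

Lemma p3p1 (S : R -> Prop) :
  S_Noetherian (modMXN M) (S_in_polyN S) -> S_Noetherian (modM M) S.
Proof.
move=> h3 L hL.
have hLX := LX_sub hL.
have hL' := TP_sub hLX.
case: (h3 _ hL') => sN [G' [[s [hs ->]] [hG'sub [F' hF']] hLG hGL]].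
have hF'L : forall y, List.In y F' -> exists u, Nset u /\ forall k, L (conv u (cf y.1) k).
  move=> y hy.
  have : G' y by apply/hF'; apply: spanN_In.
  move/hGL => [q [d [hq /eqN_iff [w [hw he]]]]].
  exists (w * denv d); split; first by apply: Nset_mul => //; exact: Nset_denv.
  move=> k; rewrite he -nth_scaleMX.
  by case: hLX => _ _ _ Ls; apply: Ls.
have [us [hus1 hus2]] := choice_zip hF'L.
pose Z := zip F' us.
pose F0 := flatten (map (fun yu : frac * {poly R} => scaleMX yu.2 yu.1.1) Z).
pose U := \prod_(yu <- Z) yu.2.
have hU : Nset U by apply: prod_N => z hz; case: z hz => y u /hus2 [].
have spS := span_submodule (smodM M) F0.
case: (spS) => spE sp0 spA spSc.
have sp_sum : forall n (Gf : 'I_n -> M), (forall i, span (D:=modM M) F0 (Gf i)) ->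
    span (D:=modM M) F0 (\sum_(i < n) Gf i).
  by move=> n Gf hG; apply: subM_sum.
pose P := fun p => forall k, span (D:=modM M) F0 ((scaleMX U p)`_k).
have hP : Defs.submodule (D:=modMX M) P.
  split.
  - move=> p q /eqMX_cf hpq hp k; by rewrite nth_scaleMX -hpq -nth_scaleMX.
  - by move=> k; rewrite nth_scaleMX cf_nil conv0r.
  - move=> p q hp hq k; rewrite nth_scaleMX cf_add convDr /= -!nth_scaleMX.
    exact: spA.
  - move=> a p hp k; rewrite nth_scaleMX cf_scale convC2 convE; apply: sp_sum => i.
    apply: spSc; rewrite -nth_scaleMX; exact: hp.
have hPF' : forall y, List.In y F' -> P y.1.
  move=> y hy; case: (hus1 y hy) => u hyu.
  have [V hV] := prod_split hyu.
  move=> k; rewrite nth_scaleMX /U hV /= convA convE; apply: sp_sum => i.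
  apply: spSc; set j := (k - i)%N.
  case: (ltnP j (size (scaleMX u y.1))) => hj.
    rewrite -nth_scaleMX; apply: (span_In (smodM M)).
    apply: (In_flatten (x := (y, u))) => //; exact: In_nth.
  by rewrite -nth_scaleMX nth_default //; exact: sp0.
have hF0L : forall m, List.In m F0 -> L m.
  move=> m hmm; case: (In_flatten_inv hmm) => [[y u] [hyu hm]].
  case: (In_nth_inv 0 hm) => j [hj ->] /=; rewrite nth_scaleMX.
  by case: (hus2 _ _ hyu) => _; apply.
exists s, (span (D:=modM M) F0); split => //.
- exact: (fin_gen_span (smodM M)).
- move=> m hm.
  have hm' : TP (fun p => forall k, L p`_k) ([:: m], [::]).
    exists [:: m], [::]; split; last exact: eqN_refl.
    by case=> [|k] //=; rewrite nth_nil; case: hL.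
  have /hF' [a [ha]] := hLG _ hm'.
  case hQ : (lincomb (D:=modMXN M) a F') => [Q D].
  have hPQ : P Q by have := lincombN_nf a hP hPF'; rewrite hQ.
  move=> /eqN_iff [w [hw /= he]].
  apply: (content_sc (W := U * (w * denv D))) => //.
    by apply: Nset_mul => //; apply: Nset_mul => //; exact: Nset_denv.
  move=> k; rewrite -conv_single -cf_single convA he denv_nil mulr1 convC2 convE.
  apply: sp_sum => i; apply: spSc; rewrite -nth_scaleMX; exact: hPQ.
- by move=> x; apply: (span_sub (smodM M)).
Qed.

End Main3.


Lemma choice_map (A B : Type) (P : B -> Prop) (g : B -> A) (l : seq A) :
  (forall x, List.In x l -> exists b, P b /\ g b = x) ->
  exists bs : seq B, (forall b, List.In b bs -> P b) /\ l = map g bs.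
Proof.
elim: l => [|x l IH] hl; first by exists [::]; split.
have [b [hb hbx]] := hl x (or_introl erefl).
have [bs [h1 h2]] := IH (fun y hy => hl y (or_intror hy)).
exists (b :: bs); split; last by rewrite /= hbx h2.
by move=> c /= [<-|hc]; [exact: hb | exact: h1].
Qed.

Section Hilbert.
Variables (R : comNzRingType) (M : lmodType R).
Implicit Types (w : {poly R}) (p q : seq M).

Definition bnd n p := forall k, (n <= k)%N -> p`_k = 0.

Lemma nth_scaleC (c : R) p k : (scaleMX c%:P p)`_k = c *: p`_k.
Proof. by rewrite nth_scaleMX convC. Qed.

Lemma lincombM_zeros cs (F : seq M) : (forall y, List.In y F -> y = 0) ->
  lincomb (D:=modM M) cs F = 0.
Proof.
elim: F cs => [|y F IH] [|c cs] hF //.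
rewrite lincombM_cons IH ?(hF y (or_introl erefl)) ?scaler0 ?addr0 //.
by move=> z hz; apply: hF; right.
Qed.

Lemma Lc_coef e cs (fs : seq (seq M)) k :
  (lincomb (D:=modMX M) [seq c%:P * 'X^e | c <- cs] fs)`_k =
  if (e <= k)%N then lincomb (D:=modM M) cs [seq f`_(k - e) | f <- fs] else 0.
Proof.
elim: fs cs => [|f fs IH] [|c cs] /=; try by rewrite nth_nil; case: ifP.
rewrite lincombX_cons lincombM_cons nth_addMX nth_scaleMX IH convA convC convX.
by case: ifP => _; rewrite ?scaler0 ?addr0.
Qed.

Definition red p (c : R) e cs (fs : seq (seq M)) :=
  addMX (scaleMX c%:P p) (scaleMX (-1)%:P (lincomb (D:=modMX M) [seq c%:P * 'X^e | c <- cs] fs)).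

Lemma red_L (L : seq M -> Prop) p c e cs fs : Defs.submodule (D:=modMX M) L ->
  L p -> (forall f, List.In f fs -> L f) -> L (red p c e cs fs).
Proof.
move=> hL hp hfs; case: (hL) => Le L0 La Ls.
apply: (La); first exact: (Ls).
by apply: (Ls); apply: submodule_lincomb.
Qed.

Lemma red_bnd p c d e cs fs : bnd (d + e).+1 p -> (forall f, List.In f fs -> bnd d.+1 f) ->
  c *: p`_(d + e) = lincomb (D:=modM M) cs [seq f`_d | f <- fs] ->
  bnd (d + e) (red p c e cs fs).
Proof.
move=> hp hfs htop k hk; rewrite /red nth_addMX !nth_scaleC Lc_coef.
have hek : (e <= k)%N by apply: leq_trans hk; exact: leq_addl.
rewrite hek; case: (ltnP (d + e) k) => hk2.
  rewrite hp // scaler0 add0r lincombM_zeros ?scaler0 //.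
  move=> y hy; case: (In_map_ex hy) => f [hf ->]; apply: hfs => //.
  by move: hk2; lia.
have -> : k = (d + e)%N by apply/eqP; rewrite eqn_leq hk hk2.
by rewrite htop addnK scaleN1r subrr.
Qed.

Lemma red_eq p c e cs fs :
  forall k, c *: p`_k = (red p c e cs fs)`_k +
     (lincomb (D:=modMX M) [seq c%:P * 'X^e | c <- cs] fs)`_k.
Proof. by move=> k; rewrite /red nth_addMX !nth_scaleC scaleN1r subrK. Qed.

Variable (S : R -> Prop).
Hypotheses (hSm : multiplicative S) (h1 : S_Noetherian (modM M) S).
Variable L : seq M -> Prop.
Hypothesis hL : Defs.submodule (D:=modMX M) L.

Definition J n (m : M) := exists f, [/\ L f, bnd n.+1 f & f`_n = m].

Lemma Jsub n : Defs.submodule (D:=modM M) (J n).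
Proof.
case: hL => Le L0 La Ls; split.
- by move=> x y /= ->.
- by exists [::]; split => //; [move=> k _; exact: nth_nil | exact: nth_nil].
- move=> x y [f [hf bf <-]] [g [hg bg <-]]; exists (addMX f g); split.
  + exact: La.
  + by move=> k hk; rewrite nth_addMX bf ?bg ?addr0.
  + by rewrite nth_addMX.
- move=> a x [f [hf bf <-]]; exists (scaleMX a%:P f); split.
  + exact: Ls.
  + by move=> k hk; rewrite nth_scaleC bf ?scaler0.
  + by rewrite nth_scaleC.
Qed.

Lemma Jshift n j m : J n m -> J (n + j) m.
Proof.
case=> f [hf bf hm]; exists (scaleMX 'X^j f); split.
- by case: hL => _ _ _ Ls; apply: Ls.
- move=> k hk; rewrite nth_scaleMX convX; case: ifP => // hjk.
  by apply: bf; move: hk hjk; lia.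
- by rewrite nth_scaleMX convX leq_addl addnK.
Qed.

Definition Jall (m : M) := exists n, J n m.

Lemma Jallsub : Defs.submodule (D:=modM M) Jall.
Proof.
split.
- by move=> x y /= ->.
- by exists 0%N; case: (Jsub 0).
- move=> x y [n hx] [n' hy]; exists (n + n')%N.
  case: (Jsub (n + n')) => _ _ Ja _; apply: Ja; first exact: Jshift.
  by rewrite addnC; exact: Jshift.
- move=> a x [n hx]; exists n; case: (Jsub n) => _ _ _ Js; exact: Js.
Qed.


Lemma spanX_eq (F : seq (seq M)) x y : eqMX x y -> span (D:=modMX M) F x -> span (D:=modMX M) F y.
Proof. by case: (span_submodule (smodMX M) F) => Se _ _ _; apply: Se. Qed.

Lemma spanX_add (F : seq (seq M)) x y : span (D:=modMX M) F x -> span (D:=modMX M) F y ->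
  span (D:=modMX M) F (addMX x y).
Proof. by case: (span_submodule (smodMX M) F) => _ _ Sa _; apply: Sa. Qed.

Lemma spanX_scale (F : seq (seq M)) a x : span (D:=modMX M) F x ->
  span (D:=modMX M) F (scaleMX a x).
Proof. by case: (span_submodule (smodMX M) F) => _ _ _ Ss; apply: Ss. Qed.

Lemma spanX_Lc e cs (fs : seq (seq M)) : size cs = size fs ->
  span (D:=modMX M) fs (lincomb (D:=modMX M) [seq c%:P * 'X^e | c <- cs] fs).
Proof.
move=> hs; exists [seq c%:P * 'X^e | c <- cs]; split; first by rewrite size_map.
by move=> k.
Qed.

Lemma low n : exists s' hs, [/\ S s', (forall h, List.In h hs -> L h) &
   forall h, L h -> bnd n h -> span (D:=modMX M) hs (scaleMX s'%:P h)].
Proof.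
elim: n => [|n [s'' [hs'' [hS'' hIn'' hspan'']]]].
  exists 1, [::]; split => //; first by case: hSm.
  move=> h hh bh; exists [::]; split => //.
  by move=> k; rewrite nth_scaleC bh // nth_nil scaler0.
case: (h1 (Jsub n)) => sn [G [hsn [hGsub [B hB]] hJG hGJ]].
have hBJ : forall b, List.In b B -> exists y, (L y /\ bnd n.+1 y) /\ y`_n = b.
  move=> b hb; have : G b by apply/hB; apply: (span_In (smodM M)).
  by case/hGJ => y [hy bdy hyb]; exists y.
case: (choice_map hBJ) => fsB [hfsB eB].
exists (s'' * sn), (hs'' ++ fsB); split.
- by case: hSm => _; apply.
- move=> h hh0; case: (List.in_app_or _ _ _ hh0) => hh; first exact: hIn''.
  by case: (hfsB h hh).
move=> h hh bh.
have hJ : J n h`_n by exists h; split.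
have /hB [cs [hcs hcsB]] := hJG _ hJ.
have bh0 : bnd (n + 0).+1 h by rewrite addn0.
have htop : sn *: h`_(n + 0) = lincomb (D:=modM M) cs [seq y`_n | y <- fsB].
  by rewrite addn0 -eB.
have Lh' := red_L sn 0 cs hL hh (fun f hf => (hfsB f hf).1).
have bh' := red_bnd bh0 (fun f hf => (hfsB f hf).2) htop.
rewrite addn0 in bh'.
have hsp := hspan'' _ Lh' bh'.
apply: (@spanX_eq _ (addMX (scaleMX s''%:P (red h sn 0 cs fsB))
     (scaleMX s''%:P (lincomb (D:=modMX M) [seq c%:P * 'X^0 | c <- cs] fsB)))).
  move=> k; rewrite nth_addMX !nth_scaleC -scalerDr -red_eq.
  by rewrite scalerA.
apply: spanX_add.
  by apply: (span_catl (smodMX M)).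
apply: (span_catr (smodMX M)); apply: spanX_scale; apply: spanX_Lc.
by rewrite hcs eB size_map.
Qed.

Lemma high s1 Dg (fs : seq (seq M)) (A : seq M) :
  (forall f, List.In f fs -> L f /\ bnd Dg.+1 f) -> A = [seq f`_Dg | f <- fs] ->
  (forall m, Jall m -> span (D:=modM M) A (s1 *: m)) ->
  forall e f, L f -> bnd (Dg + e).+1 f -> exists g h,
    [/\ span (D:=modMX M) fs g, L h, bnd Dg.+1 h &
        eqMX (scaleMX (s1 ^+ e)%:P f) (addMX g h)].
Proof.
move=> hfs eA hJA; elim=> [|e IH] f hf bf.
  exists [::], f; split => //.
  - by case: (span_submodule (smodMX M) fs).
  - by rewrite -(addn0 Dg).
  - by move=> k; rewrite nth_scaleC expr0 scale1r nth_addMX nth_nil add0r.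
have hJm : Jall (f`_(Dg + e.+1)) by exists (Dg + e.+1)%N, f; split.
have [cs [hcs hcsA]] := hJA _ hJm.
have htop : s1 *: f`_(Dg + e.+1) = lincomb (D:=modM M) cs [seq y`_Dg | y <- fs].
  by rewrite -eA.
have Lf' := red_L s1 e.+1 cs hL hf (fun y hy => (hfs y hy).1).
have bf' := red_bnd bf (fun y hy => (hfs y hy).2) htop.
rewrite addnS in bf'.
have [g' [h' [hg' hh' bh' heq']]] := IH _ Lf' bf'.
exists (addMX g' (scaleMX (s1 ^+ e)%:P (lincomb (D:=modMX M) [seq c%:P * 'X^(e.+1) | c <- cs] fs))), h'.
split => //.
- apply: spanX_add => //; apply: spanX_scale; apply: spanX_Lc.
  by rewrite hcs eA size_map.
- move=> k; have := heq' k; rewrite !nth_addMX !nth_scaleC => e1.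
  rewrite exprSr -scalerA (red_eq f s1 e.+1 cs fs k) scalerDr e1.
  by rewrite -!addrA [h'`_k + _]addrC.
Qed.

Lemma common_bound (A : seq M) : (forall a, List.In a A -> Jall a) ->
  exists Dg, forall a, List.In a A -> J Dg a.
Proof.
elim: A => [|a A IH] hA; first by exists 0%N.
have [n hn] := hA a (or_introl erefl).
have [D' hD'] := IH (fun b hb => hA b (or_intror hb)).
exists (n + D')%N => b /= [<-|hb]; first exact: Jshift.
by rewrite addnC; apply: Jshift; apply: hD'.
Qed.

Lemma p1p2_main : anti_archimedean S -> S_finite (modMX M) (S_in_poly S) L.
Proof.
move=> hSa.
case: (h1 Jallsub) => s1 [GJ [hs1 [hGJsub [A hA]] hJG hGJ]].
have hAJ : forall a, List.In a A -> Jall a.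
  by move=> a ha; apply: hGJ; apply/hA; apply: (span_In (smodM M)).
have [Dg hDg] := common_bound hAJ.
have hAf : forall a, List.In a A -> exists y, (L y /\ bnd Dg.+1 y) /\ y`_Dg = a.
  by move=> a /hDg [y [hy bdy hya]]; exists y.
case: (choice_map hAf) => fs [hfs eA].
have hJA : forall m, Jall m -> span (D:=modM M) A (s1 *: m).
  by move=> m hm; apply/hA; apply: hJG.
have [s' [hs [hS' hsL hspan]]] := low Dg.+1.
have [t [ht htn]] := hSa s1 hs1.
exists (t * s')%:P, (span (D:=modMX M) (fs ++ hs)); split.
- by exists (t * s'); split => //; case: hSm => _; apply.
- exact: (fin_gen_span (smodMX M)).
- move=> f hf.
  have bf : bnd (Dg + (size (f : seq M)).+1).+1 f.
    move=> k hk; apply: nth_default; apply: (leq_trans _ hk); rewrite addnS; apply: ltnW; apply: ltnW; exact: leq_addl.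
  have [g [h [hg hh bh heq]]] := high hfs eA hJA hf bf.
  have [r hr] := htn (size (f : seq M)).+1 isT.
  have hsh := hspan h hh bh.
  apply: (@spanX_eq _ (addMX (scaleMX (r * s')%:P g) (scaleMX r%:P (scaleMX s'%:P h)))).
    move=> k; have := heq k; rewrite !nth_addMX !nth_scaleC => e1.
    rewrite (_ : (t * s') *: f`_k = (r * s') *: (s1 ^+ (size (f : seq M)).+1 *: f`_k)); last by rewrite scalerA hr; congr (_ *: _); ring.
    rewrite e1 scalerDr.
    by rewrite -!scalerA.
  apply: spanX_add.
    by apply: (span_catl (smodMX M)); apply: spanX_scale.
  by apply: (span_catr (smodMX M)); apply: spanX_scale.
- move=> x; apply: (span_sub (smodMX M)) => // y hy0; case: (List.in_app_or _ _ _ hy0) => hy.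
    by case: (hfs y hy).
  exact: hsL.
Qed.

End Hilbert.


Theorem theorem2p6 (R : comNzRingType) (S : R -> Prop) (M : lmodType R) :
  multiplicative S -> anti_archimedean S ->
  (S_Noetherian (modM M) S <-> S_Noetherian (modMX M) (S_in_poly S)) /\
  (S_Noetherian (modMX M) (S_in_poly S) <->
   S_Noetherian (modMXN M) (S_in_polyN S)).
Proof.
move=> hSm hSa.
have p12 : S_Noetherian (modM M) S -> S_Noetherian (modMX M) (S_in_poly S).
  by move=> h1 L hL; exact: (p1p2_main hSm h1 hL hSa).
split; split.
- exact: p12.
- exact: p2p1.
- exact: p2p3.
- by move=> h3; apply: p12; exact: p3p1.
Qed.
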